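(* Let $Y\subset\mathbb{R}^n$ be open and let $\omega\colon Y\to\mathbb{R}^n$, $F\colon Y\to\mathbb{R}$ and $D^\pm\colon Y\times Y\to\mathbb{R}^n$ be arbitrary functions with $D^\pm(u,u)=0$ for all $u\in Y$. Then the following are equivalent: (A) there exists $F^{\mathrm{num}}\colon Y\times Y\to\mathbb{R}$ with $F^{\mathrm{num}}(u,u)=F(u)$ such that for all $u_-,u_0,u_+\in Y$, $$\omega(u_0)\cdot\big(D^+(u_-,u_0)+D^-(u_0,u_+)\big)\ \ge\ F^{\mathrm{num}}(u_0,u_+)-F^{\mathrm{num}}(u_-,u_0);$$ (B) for all $u_-,u_+\in Y$, $$\omega(u_+)\cdot D^+(u_-,u_+)+\omega(u_-)\cdot D^-(u_-,u_+)\ \ge\ F(u_+)-F(u_-).$$ Moreover, there exists a consistent $F^{\mathrm{num}}$ for which (A) holds with equality for all triples if and only if (B) holds with equality for all pairs, and then $F^{\mathrm{num}}$ is uniquely given by $$F^{\mathrm{num}}(u_-,u_+)=\tfrac12\big(F(u_+)+F(u_-)\big)+\tfrac12\,\omega(u_-)\cdot D^-(u_-,u_+)-\tfrac12\,\omega(u_+)\cdot D^+(u_-,u_+).$$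
   Context: No relation between $\omega$, $F$ and $D^\pm$ (and no convexity) is assumed; the statement is purely algebraic. *)

(* Defs.v *)
(* R : realType, R^n = 'rV[R]_n with its normed topology. *)
From HB Require Import structures.
From mathcomp Require Import all_boot all_order all_algebra.
From mathcomp Require Import all_classical all_reals all_analysis.
Set Implicit Arguments. Unset Strict Implicit. Unset Printing Implicit Defensive.
Import Order.TTheory GRing.Theory Num.Theory.
Import numFieldNormedType.Exports.
Local Open Scope ring_scope.

Definition dotv (R : realType) (n : nat) (u v : 'rV[R]_n) : R :=
  \sum_(i < n) u 0 i * v 0 i.

(* Main.v *)
Require Import Defs.
From HB Require Import structures.
From mathcomp Require Import all_boot all_order all_algebra.
From mathcomp Require Import all_classical all_reals all_analysis.
From mathcomp Require Import lra.
Import Order.TTheory GRing.Theory Num.Theory.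
Import numFieldNormedType.Exports.
Local Open Scope classical_set_scope.
Local Open Scope ring_scope.

Lemma dotvD (R : realType) (n : nat) (w a b : 'rV[R]_n) :
  dotv w (a + b) = dotv w a + dotv w b.
Proof. by rewrite /dotv -big_split; apply: eq_bigr => i _; rewrite mxE mulrDr. Qed.

Lemma dotv0 (R : realType) (n : nat) (w : 'rV[R]_n) : dotv w 0 = 0.
Proof. by rewrite /dotv big1 // => i _; rewrite mxE mulr0. Qed.

Theorem mainTheorem3 (R : realType) (n : nat) (Y : set 'rV[R]_n) (hY : open Y)
  (omega : 'rV[R]_n -> 'rV[R]_n) (F : 'rV[R]_n -> R)
  (Dp Dm : 'rV[R]_n -> 'rV[R]_n -> 'rV[R]_n)
  (hDp : forall u, Y u -> Dp u u = 0) (hDm : forall u, Y u -> Dm u u = 0) :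
  ((exists Fnum : 'rV[R]_n -> 'rV[R]_n -> R,
      (forall u, Y u -> Fnum u u = F u) /\
      (forall um u0 up, Y um -> Y u0 -> Y up ->
         dotv (omega u0) (Dp um u0 + Dm u0 up) >= Fnum u0 up - Fnum um u0))
   <->
   (forall um up, Y um -> Y up ->
      dotv (omega up) (Dp um up) + dotv (omega um) (Dm um up) >= F up - F um))
  /\
  ((exists Fnum : 'rV[R]_n -> 'rV[R]_n -> R,
      (forall u, Y u -> Fnum u u = F u) /\
      (forall um u0 up, Y um -> Y u0 -> Y up ->
         dotv (omega u0) (Dp um u0 + Dm u0 up) = Fnum u0 up - Fnum um u0))
   <->
   (forall um up, Y um -> Y up ->
      dotv (omega up) (Dp um up) + dotv (omega um) (Dm um up) = F up - F um))
  /\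
  ((forall um up, Y um -> Y up ->
      dotv (omega up) (Dp um up) + dotv (omega um) (Dm um up) = F up - F um) ->
   forall Fnum : 'rV[R]_n -> 'rV[R]_n -> R,
      (forall u, Y u -> Fnum u u = F u) ->
      (forall um u0 up, Y um -> Y u0 -> Y up ->
         dotv (omega u0) (Dp um u0 + Dm u0 up) = Fnum u0 up - Fnum um u0) ->
      forall um up, Y um -> Y up ->
        Fnum um up = 2^-1 * (F up + F um) + 2^-1 * dotv (omega um) (Dm um up)
                     - 2^-1 * dotv (omega up) (Dp um up)).
Proof.
set Fd := fun a b => 2^-1 * (F b + F a) + 2^-1 * dotv (omega a) (Dm a b)
                     - 2^-1 * dotv (omega b) (Dp a b).
have FdD : forall u, Y u -> Fd u u = F u.
  by move=> u Yu; rewrite /Fd hDp // hDm // !dotv0; lra.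
split; [|split].
- split.
  + move=> [Fn [H1 H2]] um up Ym Yp.
    have := H2 um up up Ym Yp Yp; have := H2 um um up Ym Ym Yp.
    rewrite !dotvD hDm // hDp // !dotv0 H1 // H1 //; lra.
  + move=> HB; exists Fd; split => // um u0 up Ym Y0 Yp.
    have := HB um u0 Ym Y0; have := HB u0 up Y0 Yp.
    rewrite /Fd dotvD; lra.
- split.
  + move=> [Fn [H1 H2]] um up Ym Yp.
    have := H2 um up up Ym Yp Yp; have := H2 um um up Ym Ym Yp.
    rewrite !dotvD hDm // hDp // !dotv0 H1 // H1 //; lra.
  + move=> HB; exists Fd; split => // um u0 up Ym Y0 Yp.
    have := HB um u0 Ym Y0; have := HB u0 up Y0 Yp.
    rewrite /Fd dotvD; lra.
- move=> HB Fn H1 H2 um up Ym Yp.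
  have := H2 um up up Ym Yp Yp; have := H2 um um up Ym Ym Yp.
  rewrite !dotvD hDm // hDp // !dotv0 H1 // H1 //; lra.
Qed.
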